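(* Consider $n$ agents on a directed graph $G=(\mathcal{V},\mathcal{E})$ with up to $f$ Byzantine agents, hypothesis set $\Theta$ and true state $\theta^*$ as in the context. Suppose that every $1$-dimensional reduced graph of $G$ contains exactly one source component, and that for every $\theta\neq\theta^*$ and every $1$-dimensional reduced graph $\mathcal{H}_1$ of $G$ with source component $\mathcal{S}_{\mathcal{H}_1}$, $$\sum_{j\in\mathcal{S}_{\mathcal{H}_1}}D\big(\ell_j(\cdot\mid\theta^* )\,\|\,\ell_j(\cdot\mid\theta)\big)\neq0 .$$ If all non-faulty agents run Pairwise Learning, then for every non-faulty agent $i$ and every $\theta\neq\theta^*$, $r_t^i(\theta^*,\theta)\to+\infty$ and $r_t^i(\theta,\theta^* )\to-\infty$ almost surely as $t\to\infty$.
   Context: Network: $\mathcal{V}=\{1,\dots,n\}$, $\mathcal{I}_i$ the incoming neighbors of $i$; synchronous iterations $t=1,2,\dots$. An unknown set $\mathcal{F}$ of at most $f$ agents is Byzantine (arbitrary behavior, possibly inconsistent messages, full knowledge, collusion); non-faulty agents know $f$; missing messages are replaced by a default value. Observations: $\Theta=\{\theta_1,\dots,\theta_m\}$; agent $i$ has finite signal space $\mathcal{S}_i$ and likelihoods $\ell_i(\cdot\mid\theta)$ with $\ell_i(w\mid\theta)>0$ for all $w,\theta$; in iteration $t$ it observes $s_t^i\sim\ell_i(\cdot\mid\theta^* )$, independently across agents and iterations; $\ell_i(s_{1,t}^i\mid\theta)=\prod_{r=1}^t\ell_i(s_r^i\mid\theta)$. $D$ is the Kullback–Leibler divergence $D(p\|q)=\sum_wp(w)\log\frac{p(w)}{q(w)}$.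 A $1$-dimensional reduced graph of $G$ is obtained by removing all faulty nodes and their incident links and then, for each non-faulty node, removing up to $f$ additional incoming links (for any possible faulty set of size at most $f$). A source component is a strongly connected component with no incoming links from outside it. Pairwise Learning at non-faulty agent $i$: initialize $r_0^i(\theta_1,\theta_2)=0$ for all ordered pairs $\theta_1\neq\theta_2$ in $\Theta$. In iteration $t\ge1$, for each ordered pair $(\theta_1,\theta_2)$, $\theta_1\ne\theta_2$: transmit $r_{t-1}^i(\theta_1,\theta_2)$ on all outgoing links; observe $s_t^i$ and receive values $\tilde r_{t-1}^j(\theta_1,\theta_2)$ from all $j\in\mathcal{I}_i$; sort the received values, remove the $f$ smallest and the $f$ largest, and let $\mathcal{I}_i^*[t]$ be the indices of the remaining neighbors; set $$r_t^i(\theta_1,\theta_2)=\frac{\sum_{j\in\mathcal{I}_i^*[t]}\tilde r_{t-1}^j(\theta_1,\theta_2)+r_{t-1}^i(\theta_1,\theta_2)}{|\mathcal{I}_i^*[t]|+1}+\log\frac{\ell_i(s_{1,t}^i\mid\theta_1)}{\ell_i(s_{1,t}^i\mid\theta_2)} .$$ *)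

(* Defs.v *)
From HB Require Import structures.
From mathcomp Require Import all_boot all_order all_algebra.
From mathcomp Require Import all_classical all_reals all_analysis.
Set Implicit Arguments. Unset Strict Implicit. Unset Printing Implicit Defensive.
Import Order.TTheory GRing.Theory Num.Theory.
Local Open Scope ring_scope.

Section PairwiseLearning.
Variables (R : realType) (n f : nat) (E : rel 'I_n).
(* E j i  means that there is a directed link j -> i. *)

Definition In_nb (i : 'I_n) : {set 'I_n} := [set j | (j != i) && E j i].

Definition reduced_graph (F : {set 'I_n}) (H : rel 'I_n) : Prop :=
  (#|F| <= f)%N /\
  (forall j i, H j i -> [&& j \notin F, i \notin F, j != i & E j i]) /\
  (forall i, i \notin F ->
     #|[set j in In_nb i | (j \notin F) && ~~ H j i]| <= f)%N.

Definition source_component (F : {set 'I_n}) (H : rel 'I_n) (C : {set 'I_n}) : Prop :=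
  (exists2 x, x \notin F &
     C = [set y | (y \notin F) && (connect H x y && connect H y x)]) /\
  (forall j i, H j i -> i \in C -> j \in C).

Variables (Th : finType) (S : 'I_n -> finType) (ell : forall i, Th -> S i -> R).

Definition KL (i : 'I_n) (a b : Th) : R :=
  \sum_(w : S i) @ell i a w * ln (@ell i a w / @ell i b w).

Definition trimmed_sum (vals : seq R) : R :=
  \sum_(v <- drop f (take (size vals - f) (sort <=%R vals))) v.

(* F = faulty set; adv t j i a b = value sent at
   iteration t.+1 by faulty j to i for pair (a,b); obs i k = signal observed
   by agent i at iteration k.+1.  PL t i a b = r_t^i(a,b). *)
Fixpoint PL (F : {set 'I_n}) (adv : nat -> 'I_n -> 'I_n -> Th -> Th -> R)
  (obs : forall i, nat -> S i) (t : nat) : 'I_n -> Th -> Th -> R :=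
  match t with
  | 0 => fun _ _ _ => 0
  | t'.+1 => fun i a b =>
      let vals := [seq (if j \in F then adv t' j i a b else PL F adv obs t' j a b)
                  | j <- enum (In_nb i)] in
      (trimmed_sum vals + PL F adv obs t' i a b) / ((size vals - 2 * f)%N%:R + 1)
      + ln ((\prod_(k < t'.+1) @ell i a (obs i k)) /
            (\prod_(k < t'.+1) @ell i b (obs i k)))
  end.

End PairwiseLearning.

(* Main.v *)
Require Import Defs.
From HB Require Import structures.
From mathcomp Require Import all_boot all_order all_algebra.
From mathcomp Require Import all_classical all_reals all_analysis.
From mathcomp Require Import zify ring lra.
Import Order.TTheory GRing.Theory Num.Theory.
Local Open Scope classical_set_scope.
Local Open Scope ring_scope.

Set Implicit Arguments. Unset Strict Implicit. Unset Printing Implicit Defensive.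

Section TS.
Variables (R : realType) (f : nat).

Definition mid (s : seq R) := drop f (take (size s - f) (sort <=%R s)).

Lemma trimmed_midE s : trimmed_sum f s = \sum_(v <- mid s) v.
Proof. by []. Qed.

Lemma size_sort_R (s : seq R) : size (sort <=%R s) = size s.
Proof. exact: size_sort. Qed.

Lemma size_mid s : size (mid s) = (size s - 2 * f)%N.
Proof.
rewrite /mid size_drop size_take_min size_sort_R.
have -> : minn (size s - f) (size s) = (size s - f)%N by apply/minn_idPl; rewrite leq_subr.
lia.
Qed.

Lemma sort_count (s : seq R) (p : pred R) : count p (sort <=%R s) = count p s.
Proof. by apply/permP/permEl/perm_sort. Qed.

Lemma sort_pw (s : seq R) : pairwise <=%R (sort <=%R s).
Proof. by rewrite -sorted_pairwise; [apply: sort_sorted; exact: le_total| exact: le_trans]. Qed.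

Lemma mid_decomp (s : seq R) : (2 * f <= size s)%N ->
  sort <=%R s = take f (sort <=%R s) ++ mid s ++ drop (size s - f) (sort <=%R s).
Proof.
move=> h; rewrite /mid catA.
rewrite -{1}(cat_take_drop (size s - f) (sort <=%R s)); congr (_ ++ _).
rewrite -{1}(cat_take_drop f (take (size s - f) (sort <=%R s))); congr (_ ++ _).
rewrite take_takel //; lia.
Qed.

Lemma mid_ge (mu : R) (s : seq R) :
  (count (fun x : R => (x < mu)%R) s <= f)%N -> all (fun x => mu <= x) (mid s).
Proof.
move=> hc.
have [h|h] := leqP (2 * f) (size s); last first.
  have : size (mid s) = 0%N by rewrite size_mid; apply/eqP; rewrite subn_eq0 ltnW.
  by move/size0nil ->.
apply/allP => x xM; rewrite leNgt; apply/negP => xlt.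
have pw := sort_pw s; rewrite (mid_decomp h) in pw.
move: pw; rewrite pairwise_cat => /and3P[ar _ _].
have hA : all (fun a => a < mu) (take f (sort <=%R s)).
  apply/allP => a aA; move/allrelP: ar => /(_ a x aA); rewrite mem_cat xM => /(_ isT) ax.
  exact: le_lt_trans ax xlt.
have := sort_count s (fun x : R => (x < mu)%R); rewrite (mid_decomp h) !count_cat.
move: hA; rewrite all_count => /eqP ->; rewrite size_takel ?size_sort_R; last lia.
have : (0 < count (fun x0 => (x0 < mu)%R) (mid s))%N by rewrite -has_count; apply/hasP; exists x.
move=> hpos e; move: hc; rewrite -e -[X in (_ <= X)%N]addn0 leq_add2l leqn0 addn_eq0 => /andP[/eqP h0 _]; by rewrite h0 in hpos.
Qed.

Lemma mid_has (X : R) (s : seq R) :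
  (f < count (fun x : R => (X <= x)%R) s)%N -> (2 * f < size s)%N -> has (fun x : R => (X <= x)%R) (mid s).
Proof.
move=> hc h; have h' : (2 * f <= size s)%N by apply: ltnW.
have pw := sort_pw s; rewrite (mid_decomp h') in pw.
move: pw; rewrite pairwise_cat => /and3P[ar _ _].
have := sort_count s (fun x : R => (X <= x)%R); rewrite (mid_decomp h') !count_cat.
have hB : (count (fun x : R => (X <= x)%R) (drop (size s - f) (sort <=%R s)) <= f)%N.
  apply: leq_trans (count_size _ _) _; rewrite size_drop size_sort_R; lia.
case: (boolP (has (fun x : R => (X <= x)%R) (mid s))) => // hM; have hM0 := hM.
move: hM; rewrite has_count; rewrite -leqNgt leqn0 => /eqP ->.
move=> e; move: hc; rewrite -e => hc; have h0 : (0 < count (fun x : R => (X <= x)%R) (take f (sort <=%R s)))%N  by lia.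
have : has (fun x : R => (X <= x)%R) (take f (sort <=%R s)) by rewrite has_count. move=> /hasP[y yA Xy].
have : (0 < size (mid s))%N by rewrite size_mid; lia.
case E: (mid s) => [|x l] // _.
have : x \in mid s by rewrite E mem_head.
move=> xM; move/allrelP: ar => /(_ y x yA); rewrite mem_cat xM => /(_ isT) yx.
by case/negP: hM0; apply/hasP; exists x; [exact: xM|exact: le_trans yx].
Qed.

Lemma sum_ge_const (mu : R) (l : seq R) : all (fun x => mu <= x) l ->
  (size l)%:R * mu <= \sum_(v <- l) v.
Proof.
elim: l => [|x l IH]; first by rewrite big_nil mul0r.
rewrite /= big_cons => /andP[hx hl]; rewrite -addn1 natrD mulrDl mul1r addrC.
exact: lerD hx (IH hl).
Qed.

Lemma sum_ge_has (mu X : R) (l : seq R) : all (fun x => mu <= x) l ->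
  has (fun x : R => (X <= x)%R) l -> X + (size l).-1%:R * mu <= \sum_(v <- l) v.
Proof.
move=> ha /hasP[y yl Xy]; rewrite (big_rem y yl) /=.
apply: lerD => //; rewrite -(size_rem yl); apply: sum_ge_const.
apply/allP => z /mem_rem zl; exact: (allP ha).
Qed.

Lemma TS1 (mu : R) (s : seq R) : (count (fun x : R => (x < mu)%R) s <= f)%N ->
  (size s - 2 * f)%N%:R * mu <= trimmed_sum f s.
Proof. by move=> h; rewrite trimmed_midE -size_mid; apply: sum_ge_const; apply: mid_ge. Qed.

Lemma TS2 (mu X : R) (s : seq R) : (count (fun x : R => (x < mu)%R) s <= f)%N ->
  (f < count (fun x : R => (X <= x)%R) s)%N -> (2 * f < size s)%N ->
  X + (size s - 2 * f).-1%:R * mu <= trimmed_sum f s.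
Proof.
move=> h1 h2 h3; rewrite trimmed_midE -size_mid; apply: sum_ge_has.
  exact: mid_ge. exact: mid_has.
Qed.

Lemma sort_neg (s : seq R) : sort <=%R (map -%R s) = rev (map -%R (sort <=%R s)).
Proof.
apply: (sorted_eq le_trans le_anti).
- apply: sort_sorted; exact: le_total.
- rewrite rev_sorted sorted_map; apply: sub_sorted (sort_sorted le_total s).
  by move=> x y /=; rewrite lerN2.
- apply: (perm_trans (permEl (perm_sort _ _))).
  rewrite perm_sym; apply: (perm_trans (permEl (perm_rev _))).
  apply: perm_map; exact: permEl (perm_sort _ _).
Qed.

Lemma trimmed_neg (s : seq R) : trimmed_sum f (map -%R s) = - trimmed_sum f s.
Proof.
rewrite !trimmed_midE /mid sort_neg size_map.
set ss := sort <=%R s.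
have hs : size ss = size s by rewrite /ss size_sort_R.
rewrite take_rev size_map hs drop_rev big_rev size_drop size_map hs -map_drop -map_take big_map sumrN.
congr (- _); congr (\big[_/_]_(i <- _) _).
have [fd|fd] := leqP f (size s); last first.
  have -> : (size s - f = 0)%N by lia.
  rewrite subn0 subnn drop_oversize ?hs //.
  by rewrite take0.
have -> : (size s - (size s - f) = f)%N by lia.
have [ff|ff] := leqP (2 * f) (size s).
  rewrite take_drop; congr (drop _ (take _ _)); lia.
have -> : (size s - f - f = 0)%N by lia.
rewrite take0; apply/esym/size0nil; rewrite size_drop size_take_min hs; lia.
Qed.
End TS.

Set Implicit Arguments. Unset Strict Implicit. Unset Printing Implicit Defensive.
Local Close Scope classical_set_scope.

Section Graph.
Variables (n f : nat) (E : rel 'I_n).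

Lemma anc_closed (H : rel 'I_n) (D : {set 'I_n}) :
  (forall j k, H j k -> k \in D -> j \in D) ->
  forall x y, x \in D -> connect H y x -> y \in D.
Proof.
move=> hD x y xD /connectP[p]; elim: p y => [|z p IH] y /=; first by move=> _ <-.
by move=> /andP[Hyz pz] ex; apply: hD Hyz _; apply: IH pz ex.
Qed.

Lemma source_exists (F : {set 'I_n}) (H : rel 'I_n) (D : {set 'I_n}) x0 :
  x0 \in D -> (forall j, j \in D -> j \notin F) ->
  (forall j k, H j k -> k \in D -> j \in D) ->
  exists C, source_component F H C /\ C \subset D.
Proof.
move=> x0D DF hD.
pose anc x := [set y | connect H y x].
case: (arg_minnP (fun x => #|anc x|) x0D) => x xD xmin.
exists [set y | (y \notin F) && (connect H x y && connect H y x)]; split; last first.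
  apply/fintype.subsetP => y; rewrite inE => /and3P[_ _ yx]; exact: anc_closed hD _ _ xD yx.
split; first by exists x; [exact: DF|].
move=> j i Hji; rewrite !inE => /and3P[iF xi ix].
have jx : connect H j x by apply: connect_trans (connect1 Hji) ix.
have jD : j \in D by apply: anc_closed hD _ _ xD jx.
rewrite DF // jx andbT /=.
have sub : anc j \subset anc x.
  by apply/fintype.subsetP => y; rewrite !inE => yj; apply: connect_trans yj jx.
have : anc j == anc x by rewrite eqEcard sub xmin.
move/eqP => e; have : x \in anc x by rewrite inE connect0.
by rewrite -e inE.
Qed.

Lemma sum_neq0_exists (R : realType) (C : {set 'I_n}) (g : 'I_n -> R) :
  \sum_(j in C) g j != 0 -> exists2 j, j \in C & g j != 0.
Proof.
move=> h; case: (pselect (exists2 j, j \in C & g j != 0)) => // hn.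
move/negP: h => h; exfalso; apply: h; apply/eqP.
apply: big1 => j jC; case: (eqVneq (g j) 0) => // gj.
by exfalso; apply: hn; exists j.
Qed.

Variable Inf : {set 'I_n}.
Hypothesis Hsrc : forall F' H C, reduced_graph f E F' H -> source_component F' H C ->
  exists2 j, j \in C & j \in Inf.

Lemma deg_lemma i : i \notin Inf -> (2 * f < #|In_nb E i|)%N.
Proof.
move=> iI; rewrite ltnNge; apply/negP => hd.
pose s := take f (enum (In_nb E i)).
pose F' := [set j in s].
pose H' := fun j k => [&& j \notin F', k \notin F', j != k, E j k & k != i].
have us : uniq s by apply: take_uniq; exact: enum_uniq.
have cF : #|F'| = minn f #|In_nb E i|.
  by rewrite cardsE (card_uniqP us) size_take_min cardE.
have F'sub : F' \subset In_nb E i.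
  by apply/fintype.subsetP => j; rewrite inE => /mem_take; rewrite mem_enum.
have iF' : i \notin F'.
  by apply/negP => /(fintype.subsetP F'sub); rewrite inE eqxx.
have red : reduced_graph f E F' H'.
  split; first by rewrite cF geq_minl.
  split; first by move=> j k /and5P[-> -> -> -> _].
  move=> k kF; case: (eqVneq k i) => [->|ki].
    apply: leq_trans (_ : #|In_nb E i :\: F'| <= f)%N.
      apply: subset_leq_card; apply/fintype.subsetP => j; rewrite !inE => /andP[-> /andP[-> _]].
      by [].
    rewrite cardsDS // cF; lia.
  suff -> : [set j in In_nb E k | (j \notin F') && ~~ H' j k] = finset.set0 by rewrite cards0.
  move: kF; rewrite /F' inE => kF; apply/setP => j; rewrite /H' /F' !inE kF ki /=.
  by case: (j \in s); case: (j != k); case: (E j k).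
have [C [sC CD]] : exists C, source_component F' H' C /\ C \subset [set i].
  apply: (source_exists (x0 := i)); first by rewrite inE.
    by move=> j; rewrite inE => /eqP ->.
  by move=> j k /and5P[_ _ _ _ ki]; rewrite inE => /eqP ki'; rewrite ki' eqxx in ki.
have [j jC jI] := Hsrc red sC.
by move/(fintype.subsetP CD): jC; rewrite inE => /eqP ji; rewrite -ji jI in iI.
Qed.

Lemma closure_lemma (F : {set 'I_n}) (Good : {set 'I_n}) :
  (#|F| <= f)%N ->
  (forall j, j \notin F -> j \in Inf -> j \in Good) ->
  (forall j, j \notin F -> j \notin Good ->
     (#|[set k in In_nb E j | (k \notin F) && (k \in Good)]| <= f)%N) ->
  forall i, i \notin F -> i \in Good.
Proof.
move=> hF hInf hcnt i iF; apply/negPn/negP => iG.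
pose D := [set j | (j \notin F) && (j \notin Good)].
pose H := fun j k => [&& j \notin F, k \notin F, j != k, E j k & ~~ ((k \in D) && (j \in Good))].
have red : reduced_graph f E F H.
  split => //; split; first by move=> j k /and5P[-> -> -> -> _].
  move=> k kF; case kD: (k \in D).
    apply: leq_trans (hcnt k kF _); last by move: kD; rewrite inE => /andP[].
    apply: subset_leq_card; apply/fintype.subsetP => j; rewrite !inE /H kD kF /=.
    move=> /andP[/andP[jk Ejk] /andP[jF]]; rewrite jF jk Ejk /= negbK => jG.
    by [].
  suff -> : [set j in In_nb E k | (j \notin F) && ~~ H j k] = finset.set0 by rewrite cards0.
  apply/setP => j; rewrite !inE /H kD kF /= andbT.
  by case: (j != k) => //=; case: (E j k) => //=; case: (j \notin F).
have [C [sC CD]] : exists C, source_component F H C /\ C \subset D.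
  apply: (source_exists (x0 := i)); first by rewrite inE iF iG.
    by move=> j; rewrite inE => /andP[].
  move=> j k /and5P[jF _ _ _ hn] kD; rewrite kD /= in hn.
  by rewrite inE jF.
have [j jC jI] := Hsrc red sC.
move/(fintype.subsetP CD): jC; rewrite inE => /andP[jF jG].
by move: (hInf j jF jI); rewrite (negbTE jG).
Qed.

End Graph.

Set Implicit Arguments. Unset Strict Implicit. Unset Printing Implicit Defensive.

Lemma fin_eventually (I : finType) (P : I -> nat -> Prop) :
  (forall i, exists N, forall t, (N <= t)%N -> P i t) ->
  exists N, forall t, (N <= t)%N -> forall i, P i t.
Proof.
move=> h; have [g hg] := choice h.
exists (\max_i g i) => t ht i; apply: hg; apply: leq_trans ht.
exact: leq_bigmax.
Qed.

Lemma sub_in_count' (T : eqType) (s : seq T) (a1 a2 : pred T) :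
  (forall x, x \in s -> a1 x -> a2 x) -> (count a1 s <= count a2 s)%N.
Proof.
elim: s => //= x s IH h; apply: leq_add; last by apply: IH => y ys; apply: h; rewrite inE ys orbT.
by case: (boolP (a1 x)) => //= ax; rewrite h ?mem_head.
Qed.

Lemma count_mem_le (T : finType) (A B : {set T}) :
  (count (mem B) (enum A) <= #|B|)%N.
Proof.
rewrite -size_filter cardE; apply: uniq_leq_size.
  by apply: filter_uniq; exact: enum_uniq.
by move=> x; rewrite mem_filter !mem_enum => /andP[].
Qed.

Lemma count_mem_ge (T : finType) (A B : {set T}) : B \subset A ->
  (#|B| <= count (mem B) (enum A))%N.
Proof.
move=> BA; rewrite -size_filter cardE; apply: uniq_leq_size; first exact: enum_uniq.
move=> x; rewrite mem_enum => xB; rewrite mem_filter mem_enum; apply/andP; split => //; exact: (fintype.subsetP BA).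
Qed.

Section Dyn.
Variables (R : realType) (n f : nat) (E : rel 'I_n) (F : {set 'I_n}) (Inf : {set 'I_n}).
Variables (adv : nat -> 'I_n -> 'I_n -> R) (v L : nat -> 'I_n -> R).

Definition vals t i := [seq (if j \in F then adv t j i else v t j) | j <- enum (In_nb E i)].

Hypothesis Hrec : forall t i, i \notin F -> v t.+1 i =
  (trimmed_sum f (vals t i) + v t i) / ((size (vals t i) - 2 * f)%N%:R + 1) + L t.+1 i.
Hypothesis HF : (#|F| <= f)%N.
Hypothesis HL1 : forall i, i \notin F -> i \in Inf ->
  forall M, exists N, forall t, (N <= t)%N -> M <= L t i.
Hypothesis HL0 : forall i, i \notin F -> i \notin Inf -> forall t, L t i = 0.
Hypothesis Hsrc : forall F' H C, reduced_graph f E F' H -> source_component F' H C ->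
  exists2 j, j \in C & j \in Inf.

Lemma size_vals t i : size (vals t i) = #|In_nb E i|.
Proof. by rewrite size_map -cardE. Qed.

Lemma count_bad t i (mu : R) : (forall j, j \notin F -> j \in In_nb E i -> mu <= v t j) ->
  (count (fun x : R => (x < mu)%R) (vals t i) <= f)%N.
Proof.
move=> h; rewrite count_map; apply: leq_trans HF.
apply: (@leq_trans (count (mem F) (enum (In_nb E i)))); last exact: count_mem_le.
apply: sub_in_count' => j; rewrite mem_enum => jA /=; case: ifP => // /negbT jF.
by rewrite ltNge h.
Qed.

Lemma step_lb t i (mu : R) : i \notin F -> (forall j, j \notin F -> mu <= v t j) ->
  mu + L t.+1 i <= v t.+1 i.
Proof.
move=> iF h; rewrite (Hrec t iF) lerD2r.
have kpos : 0 < (size (vals t i) - 2 * f)%N%:R + 1 :> R.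
  by apply: ltr_wpDl; [exact: ler0n|exact: ltr01].
rewrite ler_pdivlMr //.
have h1 := TS1 (count_bad (t:=t) (i:=i) (mu:=mu) (fun j jF _ => h j jF)).
have h2 := h i iF.
move: h1 h2; set k := ((size (vals t i) - 2 * f)%N%:R : R); set T := trimmed_sum _ _.
move=> h1 h2; lra.
Qed.

Theorem dyn : forall i, i \notin F -> forall M, exists N, forall t, (N <= t)%N -> M <= v t i.
Proof.
move=> i0 i0F.
have [T0 hT0] : exists T0, forall t, (T0 <= t)%N -> forall j, j \notin F -> 0 <= L t j.
  apply: (@fin_eventually _ (fun j t => j \notin F -> 0 <= L t j)) => j.
  case: (boolP (j \in F)) => jF; first by exists 0%N.
  case: (boolP (j \in Inf)) => jI.
    by have [N hN] := HL1 jF jI 0; exists N => t ht _; exact: hN.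
  by exists 0%N => t _ _; rewrite HL0.
pose mu := - \sum_j `|v T0 j|.
have hmu : forall t, (T0 <= t)%N -> forall j, j \notin F -> mu <= v t j.
  move=> t /subnK <-; elim: (t - T0)%N => [|k IH] j jF.
    rewrite add0n /mu (bigD1 j) //=.
    have := lerNnormlW (lexx `|v T0 j|).
    have : 0 <= \sum_(i | i != j) `|v T0 i| by apply: sumr_ge0 => *; exact: normr_ge0.
    move=> *; lra.
  rewrite addSn; apply: (le_trans _ (step_lb jF IH)).
  by rewrite lerDl; apply: hT0; lia.
pose Gd j := forall M, exists N, forall t, (N <= t)%N -> M <= v t j.
pose Good := [set j | `[< Gd j >]].
have GoodP : forall j, reflect (Gd j) (j \in Good) by move=> j; rewrite inE; exact: asboolP.
have hA : forall j, j \notin F -> j \in Inf -> j \in Good.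
  move=> j jF jI; apply/GoodP => M; have [N hN] := HL1 jF jI (M - mu).
  exists (maxn N T0).+1 => t; case: t => // t ht.
  have htT : (T0 <= t)%N by lia.
  apply: (le_trans _ (step_lb jF (hmu t htT))).
  have := hN t.+1 (ltnW (leq_ltn_trans (leq_maxl _ _) ht)); lra.
have hB : forall j, j \notin F -> j \notin Good ->
    (#|[set k in In_nb E j | (k \notin F) && (k \in Good)]| <= f)%N.
  move=> j jF jG; case: (boolP (j \in Inf)) => jI; first by rewrite hA in jG.
  rewrite leqNgt; apply/negP => hK; move/negP: jG; apply.
  have hdeg := deg_lemma Hsrc jI.
  set K := [set k in In_nb E j | (k \notin F) && (k \in Good)] in hK.
  apply/GoodP => M.
  set k := (#|In_nb E j| - 2 * f)%N.
  set M' := Num.max M mu.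
  set X := mu + (M' - mu) * (k%:R + 1).
  have [N hN] : exists N, forall t, (N <= t)%N -> forall k', k' \in K -> X <= v t k'.
    apply: (@fin_eventually _ (fun k' t => k' \in K -> X <= v t k')) => k'.
    case: (boolP (k' \in K)) => kK; last by exists 0%N.
    have : k' \in Good by move: kK; rewrite inE => /andP[_ /andP[_ ->]].
    by move/GoodP => /(_ X) [N hN]; exists N => t ht _; exact: hN.
  exists (maxn N T0).+1 => t; case: t => // t ht.
  have htN : (N <= t)%N by lia.
  have htT : (T0 <= t)%N by lia.
  rewrite (Hrec t jF) (HL0 jF jI) addr0 size_vals -/k.
  have c1 := count_bad (t:=t) (i:=j) (fun j' j'F _ => hmu t htT j' j'F).
  have c2 : (f < count (fun x : R => (X <= x)%R) (vals t j))%N.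
    apply: leq_trans hK _; rewrite count_map.
    apply: leq_trans (count_mem_ge (A:=In_nb E j) (B:=K) _) _.
      by apply/fintype.subsetP => x; rewrite inE => /andP[].
    apply: sub_in_count' => x; rewrite mem_enum => xA /= xK.
    have : x \notin F by move: xK; rewrite inE => /andP[_ /andP[]].
    by move/negbTE => ->; exact: hN.
  have h3 : (2 * f < size (vals t j))%N by rewrite size_vals.
  have hT := TS2 c1 c2 h3; rewrite size_vals -/k in hT.
  have hv := hmu t htT j jF.
  have kpos : (1 <= k)%N by rewrite /k; lia.
  have ek : (k.-1)%:R = k%:R - 1 :> R by rewrite -subn1 natrB.
  rewrite ek in hT.
  have kp : 0 < k%:R + 1 :> R by apply: ltr_wpDl; [exact: ler0n|exact: ltr01].
  rewrite ler_pdivlMr //.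
  have hM : M <= M' by rewrite le_max lexx.
  have hM2 : mu <= M' by rewrite le_max lexx orbT.
  move: hT hv kp hM hM2; rewrite /X; set T := trimmed_sum _ _; set kk := (k%:R : R).
  move=> *; nra.
have := closure_lemma Hsrc HF hA hB i0F.
by move/GoodP.
Qed.

End Dyn.

Local Open Scope classical_set_scope.
Local Open Scope ring_scope.
Set Implicit Arguments. Unset Strict Implicit. Unset Printing Implicit Defensive.

Section RealHelpers.
Variable R : realType.

Lemma ln_prod t (g : 'I_t -> R) : (forall k, 0 < g k) ->
  ln (\prod_k g k) = \sum_k ln (g k).
Proof.
elim: t g => [|t IH] g hg; first by rewrite !big_ord0 ln1.
rewrite big_ord_recr big_ord_recr /= lnM ?posrE //; last first.
  by apply: prodr_gt0 => k _.
by rewrite IH.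
Qed.

Lemma expR_sum t (g : 'I_t -> R) : expR (\sum_k g k) = \prod_k expR (g k).
Proof.
elim: t g => [|t IH] g; first by rewrite !big_ord0 expR0.
by rewrite big_ord_recr big_ord_recr /= expRD IH.
Qed.

Lemma geom_bound (q : R) k : 0 <= q < 1 -> \sum_(i < k) q ^+ i <= (1 - q)^-1.
Proof.
move=> /andP[q0 q1].
have e : (\sum_(i < k) q ^+ i) * (1 - q) = 1 - q ^+ k.
  elim: k => [|k IH]; first by rewrite big_ord0 mul0r expr0 subrr.
  by rewrite big_ord_recr /= mulrDl IH exprS; ring.
have hq : 0 < 1 - q by rewrite subr_gt0.
rewrite -(ler_pM2r hq) e mulVf ?gt_eqF //.
by rewrite lerBlDr lerDl exprn_ge0.
Qed.

Lemma am_gm_strict (p q u : R) : 0 < p -> 0 < q -> 0 <= u -> u * u = p * q ->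
  u <= (p + q) / 2 /\ (p != q -> u < (p + q) / 2).
Proof.
move=> p0 q0 u0 e; split.
  have h : 0 <= (p - q) ^+ 2 by apply: sqr_ge0.
  nra.
move=> pq; have h : 0 < (p - q) ^+ 2 by rewrite exprn_even_gt0 // subr_eq0.
nra.
Qed.

End RealHelpers.

Unset Implicit Arguments.
Section Prob.
Variables (R : realType) (d : measure_display) (Omega : measurableType d)
  (P : probability Omega R) (n : nat) (Th : finType) (S : 'I_n -> finType)
  (ell : forall i, Th -> S i -> R) (a b : Th).
Hypothesis ell_pos : forall i th w, 0 < ell i th w.
Hypothesis ell_distr : forall i th, \sum_(w : S i) ell i th w = 1.
Variable sig : forall i, nat -> Omega -> S i.
Hypothesis sig_meas : forall i k (w : S i), measurable [set om | sig i k om = w].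
Hypothesis sig_iid : forall (J : seq ('I_n * nat)) (w : forall p : 'I_n * nat, S p.1),
      uniq J ->
      P (\big[setI/setT]_(p <- J) [set om | sig p.1 p.2 om = w p]) =
      ((\prod_(p <- J) ell p.1 a (w p))%:E).
Variable j : 'I_n.

Definition xw (w : S j) := ln (ell j a w / ell j b w).
Definition ew (w : S j) := expR (- xw w / 2).
Definition uw (w : S j) := ell j a w * ew w.
Definition rho := \sum_w uw w.

Lemma uw_sq w : uw w * uw w = ell j a w * ell j b w.
Proof.
have ha := ell_pos j a w; have hb := ell_pos j b w.
have e2 : ew w * ew w = ell j b w / ell j a w.
  rewrite /ew -expRD (_ : - xw w / 2 + - xw w / 2 = - xw w); last by field.
  by rewrite expRN /xw lnK ?posrE ?divr_gt0 // invf_div.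
rewrite /uw mulrACA e2; field; exact: lt0r_neq0.
Qed.

Lemma uw_gt0 w : 0 < uw w.
Proof. by rewrite /uw mulr_gt0 // expR_gt0. Qed.

Lemma rho_bounds : (exists w0, ell j a w0 != ell j b w0) -> 0 < rho < 1.
Proof.
case=> w0 hw0; apply/andP; split.
  by rewrite /rho (bigD1 w0) //= ltr_wpDr ?uw_gt0 // sumr_ge0 // => w _; exact: ltW (uw_gt0 w).
have h1 : \sum_w (ell j a w + ell j b w) / 2 = 1.
  by rewrite -mulr_suml big_split /= !ell_distr; field.
rewrite -h1 /rho (bigD1 w0) //= [X in _ < X](bigD1 w0) //=.
have [_ h] := am_gm_strict (ell_pos j a w0) (ell_pos j b w0) (ltW (uw_gt0 w0)) (uw_sq w0).
apply: ltr_leD; first exact: h.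
apply: ler_sum => w _.
by have [h' _] := am_gm_strict (ell_pos j a w) (ell_pos j b w) (ltW (uw_gt0 w)) (uw_sq w).
Qed.

Definition sigma := (1 + rho) / 2.
Definition qq := rho / sigma.

Definition B t := [set om | sigma ^+ t <= \prod_(k < t) ew (sig j k om)].
Definition Jt t := [seq (j, nat_of_ord k) | k <- index_enum 'I_t].

Definition wext t (w : {ffun 'I_t -> S j}) (p : 'I_n * nat) : S p.1 :=
  match (j =P p.1) with
  | ReflectT e => eq_rect j S (match insub p.2 with Some k => w k | None => sig j 0 point end) p.1 e
  | ReflectF _ => sig p.1 0 point
  end.
Arguments wext {t} w p.

Lemma wextE t (w : {ffun 'I_t -> S j}) (k : 'I_t) : wext w (j, nat_of_ord k) = w k.
Proof.
rewrite /wext /=; case: eqP => // e.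
by rewrite (eq_irrelevance e erefl) /= valK.
Qed.

Definition cyl t (w : {ffun 'I_t -> S j}) :=
  \big[setI/setT]_(p <- Jt t) [set om | sig p.1 p.2 om = wext w p].
Definition cond t (w : {ffun 'I_t -> S j}) : bool := sigma ^+ t <= \prod_k ew (w k).
Arguments cyl {t} w.
Arguments cond {t} w.

Lemma cylP t (w : {ffun 'I_t -> S j}) om : cyl w om <-> forall k : 'I_t, sig j k om = w k.
Proof.
rewrite /cyl -bigcap_seq; split.
  move=> h k; rewrite -wextE; apply: (h (j, nat_of_ord k)) => /=.
  by apply: map_f; rewrite mem_index_enum.
move=> h p /= /mapP[k _ ->] /=; rewrite wextE; exact: h.
Qed.

Lemma B_eq t : B t = \big[setU/set0]_(w : {ffun 'I_t -> S j} | cond w) cyl w.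
Proof.
rewrite -bigcup_seq_cond; apply/seteqP; split => om.
  move=> hB; exists [ffun k : 'I_t => sig j k om].
    by rewrite /= mem_index_enum /cond /=; under eq_bigr do rewrite ffunE.
  by apply/cylP => k; rewrite ffunE.
case=> w /= /andP[_ cw] /cylP cy; rewrite /B /=.
by under eq_bigr do rewrite cy.
Qed.

Lemma cyl_meas t (w : {ffun 'I_t -> S j}) : measurable (cyl w).
Proof. by apply: bigsetI_measurable => p _; exact: sig_meas. Qed.

Lemma B_meas t : measurable (B t).
Proof. by rewrite B_eq; apply: bigsetU_measurable => w _; exact: cyl_meas. Qed.

Lemma P_cyl t (w : {ffun 'I_t -> S j}) : P (cyl w) = (\prod_k ell j a (w k))%:E.
Proof.
rewrite /cyl sig_iid; last first.
  rewrite map_inj_uniq; first exact: index_enum_uniq.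
  by move=> k1 k2 [] /val_inj.
by rewrite big_map; congr (_%:E); apply: eq_bigr => k _ /=; rewrite wextE.
Qed.

Local Open Scope ereal_scope.
Lemma P_bigU (I : Type) (r : seq I) (Pr : pred I) (A : I -> set Omega) :
  (forall i, measurable (A i)) ->
  P (\big[setU/set0]_(i <- r | Pr i) A i) <= \sum_(i <- r | Pr i) P (A i).
Proof.
move=> mA; elim: r => [|i r IH]; first by rewrite !big_nil measure0.
rewrite !big_cons; case: (Pr i) => //.
apply: le_trans (measureU2 _ _ _) _ => //.
  by apply: bigsetU_measurable => k _; exact: mA.
exact: leeD2l.
Qed.
Local Close Scope ereal_scope.

Hypothesis hw : exists w0, ell j a w0 != ell j b w0.

Lemma sigma_bounds : 0 < sigma < 1.
Proof. have /andP[r0 r1] := rho_bounds hw; rewrite /sigma; apply/andP; split; lra. Qed.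

Lemma P_B t : (P (B t) <= (qq ^+ t)%:E)%E.
Proof.
have /andP[r0 r1] := rho_bounds hw; have /andP[s0 s1] := sigma_bounds.
rewrite B_eq; apply: le_trans (P_bigU _ _ _ _ (cyl_meas t)) _.
under eq_bigr do rewrite P_cyl.
rewrite sumEFin lee_fin.
have st : 0 < sigma ^+ t by exact: exprn_gt0.
apply: (@le_trans _ _ (\sum_(w : {ffun 'I_t -> S j} | cond w) (\prod_k uw (w k)) / sigma ^+ t)).
  apply: ler_sum => w cw.
  rewrite /uw big_split /= -mulrA ler_peMr //; first by apply: prodr_ge0 => k _; exact: ltW.
  by rewrite ler_pdivlMr // mul1r.
apply: (@le_trans _ _ (\sum_(w : {ffun 'I_t -> S j}) (\prod_k uw (w k)) / sigma ^+ t)).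
  rewrite [X in _ <= X](bigID cond) /= lerDl; apply: sumr_ge0 => w _.
  by rewrite divr_ge0 ?(ltW st) //; apply: prodr_ge0 => k _; exact: ltW (uw_gt0 _).
rewrite -mulr_suml -(bigA_distr_bigA (fun (k : 'I_t) (y : S j) => uw y)) /=.
by rewrite prodr_const card_ord /qq -expr_div_n.
Qed.

Lemma sumP_fin : (\sum_(t <oo) P (B t) < +oo)%E.
Proof.
have /andP[r0 r1] := rho_bounds hw; have /andP[s0 s1] := sigma_bounds.
have q0 : 0 <= qq by rewrite /qq divr_ge0 // ltW.
have q1 : qq < 1 by rewrite /qq ltr_pdivrMr // mul1r /sigma; lra.
apply: (@le_lt_trans _ _ (\sum_(t <oo) (qq ^+ t)%:E)%E).
  by apply: lee_nneseries => [t _ _|t _]; [exact: measure_ge0|exact: P_B].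
apply: (@le_lt_trans _ _ ((1 - qq)^-1)%:E); last exact: ltey.
apply: lime_le; first by apply: is_cvg_nneseries => k _ _; rewrite lee_fin exprn_ge0.
apply: nearW => k; rewrite sumEFin lee_fin big_mkord; apply: geom_bound.
by rewrite q0 q1.
Qed.

Lemma Lc_eq t om : ln ((\prod_(k < t) ell j a (sig j k om)) / (\prod_(k < t) ell j b (sig j k om)))
  = \sum_(k < t) xw (sig j k om).
Proof. by rewrite -prodf_div ln_prod // => k; rewrite divr_gt0. Qed.

Theorem Lc_ae : {ae P, forall om, forall M, exists N, forall t, (N <= t)%N ->
  M <= ln ((\prod_(k < t) ell j a (sig j k om)) / (\prod_(k < t) ell j b (sig j k om)))}.
Proof.
have /andP[s0 s1] := sigma_bounds.
exists (lim_sup_set B); split.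
- rewrite /lim_sup_set; apply: bigcap_measurable => [|k _]; first by exists 0%N.
  by apply: bigcup_measurable => i _; exact: B_meas.
- exact: lim_sup_set_cvg0 (fun k => B_meas k) sumP_fin.
move=> om /= ngood; apply: contrapT => nl; apply: ngood.
have [N0 hN0] : exists N0, forall t, (N0 <= t)%N -> ~ B t om.
  apply: contrapT => h; apply: nl => m _; apply: contrapT => hm; apply: h.
  by exists m => t ht Bt; apply: hm; exists t.
pose c := - (2 * ln sigma).
have c0 : 0 < c by rewrite /c oppr_gt0 pmulr_rlt0 // ln_lt0 // s0 s1.
have key : forall t, (N0 <= t)%N -> t%:R * c <
    ln ((\prod_(k < t) ell j a (sig j k om)) / (\prod_(k < t) ell j b (sig j k om))).
  move=> t ht; have := hN0 t ht; rewrite /B /= => /negP; rewrite -ltNge Lc_eq.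
  rewrite (_ : \prod_(k < t) ew (sig j k om) = expR (- (\sum_(k < t) xw (sig j k om)) / 2)); last first.
    by rewrite /ew -expR_sum -mulr_suml sumrN.
  rewrite -[sigma ^+ t]lnK ?posrE ?exprn_gt0 // ltr_expR lnXn // -mulr_natr /c.
  move=> h; lra.
move=> M; exists (maxn N0 (Num.truncn (M / c)).+1) => t ht.
have := key t (leq_trans (leq_maxl _ _) ht).
have : M / c < t%:R.
  apply: lt_le_trans (Num.Theory.truncnS_gt _) _; rewrite ler_nat.
  exact: leq_trans (leq_maxr _ _) ht.
rewrite ltr_pdivrMr // => *; lra.
Qed.

End Prob.

Unset Implicit Arguments.
Local Open Scope classical_set_scope.
Local Open Scope ring_scope.

Lemma PL_neg (R : realType) (n f : nat) (E : rel 'I_n) (Th : finType) (S : 'I_n -> finType)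
  (ell : forall i, Th -> S i -> R) (ell_pos : forall i a w, 0 < ell i a w)
  (F : {set 'I_n}) (adv : nat -> 'I_n -> 'I_n -> Th -> Th -> R) (obs : forall i, nat -> S i) :
  forall t i a b, PL f E ell F adv obs t i b a =
    - PL f E ell F (fun t j i x y => - adv t j i y x) obs t i a b.
Proof.
elim=> [|t IH] i a b /=; first by rewrite oppr0.
set vL := [seq _ | _ <- _]; set vR := [seq _ | _ <- _].
have -> : vL = map -%R vR.
  rewrite /vL /vR -map_comp; apply: eq_map => j /=.
  by case: ifP => _; rewrite ?opprK ?IH.
rewrite trimmed_neg size_map IH.
have pa : 0 < \prod_(k < t.+1) ell i a (obs i k) by apply: prodr_gt0 => k _.
have pb : 0 < \prod_(k < t.+1) ell i b (obs i k) by apply: prodr_gt0 => k _.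
rewrite -[X in ln X]invf_div lnV ?posrE ?divr_gt0 //.
set T := trimmed_sum _ _; set r := PL _ _ _ _ _ _ _ _ _ _; set l := ln _.
set k := _%:R. 
by rewrite -opprD mulNr opprD.
Qed.

Lemma det (R : realType) (n f : nat) (E : rel 'I_n) (Th : finType) (S : 'I_n -> finType)
  (ell : forall i, Th -> S i -> R) (ell_pos : forall i a w, 0 < ell i a w)
  (a b : Th) (F : {set 'I_n}) (HF : (#|F| <= f)%N)
  (Hsrc : forall F' H C, reduced_graph f E F' H -> source_component F' H C ->
     exists2 j, j \in C & j \in [set j | [exists w, ell j a w != ell j b w]]%SET)
  (obs : forall i, nat -> S i)
  (HL1 : forall j, [exists w, ell j a w != ell j b w] -> forall M, exists N, forall t,
     (N <= t)%N -> M <= ln ((\prod_(k < t) ell j a (obs j k)) / (\prod_(k < t) ell j b (obs j k))))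
  (advx : nat -> 'I_n -> 'I_n -> Th -> Th -> R) :
  forall i, i \notin F -> forall M, exists N, forall t, (N <= t)%N ->
    M <= PL f E ell F advx obs t i a b.
Proof.
move=> i iF.
apply: (@dyn R n f E F [set j | [exists w, ell j a w != ell j b w]]%SET
  (fun t j i => advx t j i a b) (fun t i => PL f E ell F advx obs t i a b)
  (fun t j => ln ((\prod_(k < t) ell j a (obs j k)) / (\prod_(k < t) ell j b (obs j k))))
  _ HF _ _ Hsrc i iF).
- by move=> t j jF.
- by move=> j _; rewrite inE => /HL1.
- move=> j _; rewrite inE negb_exists => /forallP h t.
  have e : forall w, ell j a w = ell j b w by move=> w; move: (h w); rewrite negbK => /eqP.
  under eq_bigr do rewrite e.
  rewrite divff ?ln1 //; apply: lt0r_neq0; exact: prodr_gt0.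
Qed.
Theorem theorem8 (R : realType) (d : measure_display) (Omega : measurableType d)
  (P : probability Omega R) (n f : nat) (E : rel 'I_n)
  (Th : finType) (th_star : Th) (S : 'I_n -> finType)
  (ell : forall i, Th -> S i -> R)
  (ell_pos : forall i a w, 0 < ell i a w)
  (ell_distr : forall i a, \sum_(w : S i) ell i a w = 1)
  (sig : forall i, nat -> Omega -> S i)
  (sig_meas : forall i k (w : S i), measurable [set om | sig i k om = w])
  (sig_iid : forall (J : seq ('I_n * nat)) (w : forall p : 'I_n * nat, S p.1),
      uniq J ->
      P (\big[setI/setT]_(p <- J) [set om | sig p.1 p.2 om = w p]) =
      ((\prod_(p <- J) ell p.1 th_star (w p))%:E))
  (one_source : forall F H, reduced_graph f E F H ->
      exists C, source_component F H C /\
                (forall C', source_component F H C' -> C' = C))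
  (identif : forall th, th != th_star -> forall F H C,
      reduced_graph f E F H -> source_component F H C ->
      \sum_(j in C) KL ell j th_star th != 0)
  (F : {set 'I_n}) (HF : (#|F| <= f)%N)
  (adv : Omega -> nat -> 'I_n -> 'I_n -> Th -> Th -> R) :
  forall i, i \notin F -> forall th, th != th_star ->
  {ae P, forall om,
     ((fun t => PL f E ell F (adv om) (fun j k => sig j k om) t i th_star th)
        @ \oo --> +oo) /\
     ((fun t => PL f E ell F (adv om) (fun j k => sig j k om) t i th th_star)
        @ \oo --> -oo)}.

Proof.
move=> i iF th hth.
pose Inf := [set j | [exists w, ell j th_star w != ell j th w]]%SET.
have Hsrc : forall F' H C, reduced_graph f E F' H -> source_component F' H C ->
    exists2 j, j \in C & j \in Inf.
  move=> F' H C red sc; have := identif th hth F' H C red sc.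
  move/sum_neq0_exists => [j jC hj]; exists j => //; rewrite inE.
  apply/existsP; apply: contrapT => hn.
  move/negP: hj; apply; apply/eqP; apply: big1 => w _.
  have e : ell j th_star w = ell j th w.
    by apply/eqP; apply: contrapT => ne; apply: hn; exists w; apply/negP.
  by rewrite e divff ?ln1 ?mulr0 // lt0r_neq0.
have hae : {ae P, forall om, forall j, j \in Inf -> forall M, exists N, forall t, (N <= t)%N ->
    M <= ln ((\prod_(k < t) ell j th_star (sig j k om)) / (\prod_(k < t) ell j th (sig j k om)))}.
  apply: filter_forall => j; case: (boolP (j \in Inf)) => jI.
    have hw : exists w0, ell j th_star w0 != ell j th w0 by move: jI; rewrite inE => /existsP.
    apply: filterS (@Lc_ae R d Omega P n Th S ell th_star th ell_pos ell_distr sig sig_meas sig_iid j hw).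
    by move=> om h _; exact: h.
  by apply: aeW => om.
apply: filterS hae => om hom.
have HL1 : forall j, [exists w, ell j th_star w != ell j th w] -> forall M, exists N, forall t, (N <= t)%N ->
    M <= ln ((\prod_(k < t) ell j th_star (sig j k om)) / (\prod_(k < t) ell j th (sig j k om))).
  by move=> j hj; apply: hom; rewrite inE.
split.
  apply/cvgryPge => M.
  have [N hN] := det _ _ _ _ _ _ _ ell_pos _ _ _ HF Hsrc (fun j k => sig j k om) HL1 (adv om) _ iF M.
  by exists N.
apply/cvgrNyPle => M.
have [N hN] := det _ _ _ _ _ _ _ ell_pos _ _ _ HF Hsrc (fun j k => sig j k om) HL1
  (fun t j i x y => - adv om t j i y x) _ iF (- M).
exists N => // t ht /=; rewrite (PL_neg _ _ _ _ _ _ _ ell_pos) lerNl; exact: hN.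
Qed.
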